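(* Let $q$ be a prime power and $n$ a positive integer with $\gcd(q,n)=1$; write $v=\nu_2(n)$ and $n=2^vn'$ with $n'$ odd. Let $s\in\mathbb{Z}_n^*$ and $t\in\mathbb{Z}_n$ with $qt\equiv t\pmod n$. Then Type-I duadic splittings of $\mathbb{Z}_n$ given by $\rho_{s,t}$ exist if and only if Type-I duadic splittings of $\mathbb{Z}_{2^v}$ given by $\rho_{s,t}$ (with $s,t$ reduced modulo $2^v$) exist.
   Context: For a modulus $m$ coprime to $q$, with $s$ coprime to $m$ and $qt\equiv t\pmod m$: $\mu_q:\mathbb{Z}_m\to\mathbb{Z}_m$, $i\mapsto qi\bmod m$; $P\subseteq\mathbb{Z}_m$ is $\mu_q$-invariant if $\mu_q(P)=P$; $\rho_{s,t}:\mathbb{Z}_m\to\mathbb{Z}_m$, $i\mapsto s(i+t)\bmod m$. Type-I duadic splittings of $\mathbb{Z}_m$ given by $\rho_{s,t}$ exist if there is a $\mu_q$-invariant $P\subseteq\mathbb{Z}_m$ with $\mathbb{Z}_m=P\cup\rho_{s,t}(P)$ a disjoint union. $\nu_2$ is the $2$-adic valuation. *)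

(* Defs.v *)
From mathcomp Require Import all_boot.
Set Implicit Arguments. Unset Strict Implicit. Unset Printing Implicit Defensive.

(* Z_m is represented by the ordinals 'I_m (residues 0..m-1); this also
   covers m = 1 (Z_1 = {0}). *)

Definition img_mod (m : nat) (f : nat -> nat) (P : {set 'I_m}) : {set 'I_m} :=
  [set j : 'I_m | [exists i in P, val j == f (val i) %% m]].

Definition mu (m q : nat) (P : {set 'I_m}) : {set 'I_m} := img_mod (fun i => q * i) P.

Definition rho (m s t : nat) (P : {set 'I_m}) : {set 'I_m} := img_mod (fun i => s * (i + t)) P.

Definition mu_invariant (m q : nat) (P : {set 'I_m}) : Prop := mu q P = P.

Definition typeI_duadic_exists (q m s t : nat) : Prop :=
  exists P : {set 'I_m},
    mu_invariant q P /\ P :|: rho s t P = setT /\ P :&: rho s t P = set0.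

Definition prime_power (q : nat) : Prop := exists p k, prime p /\ 0 < k /\ q = p ^ k.

(* Main.v *)
Require Import Defs.
From mathcomp Require Import all_boot all_algebra all_fingroup all_solvable.
From mathcomp Require Import ring.
Set Implicit Arguments. Unset Strict Implicit. Unset Printing Implicit Defensive.

Section Helpers.
Implicit Types m a b c x y : nat.

Lemma eqmD m a a' b b' : a = a' %[mod m] -> b = b' %[mod m] -> a + b = a' + b' %[mod m].
Proof. by move=> Ha Hb; rewrite -modnDm Ha Hb modnDm. Qed.
Lemma eqmM m a a' b b' : a = a' %[mod m] -> b = b' %[mod m] -> a * b = a' * b' %[mod m].
Proof. by move=> Ha Hb; rewrite -modnMm Ha Hb modnMm. Qed.
Lemma eqmX m a a' k : a = a' %[mod m] -> a ^ k = a' ^ k %[mod m].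
Proof. by move=> Ha; rewrite -modnXm Ha modnXm. Qed.
Lemma eqm_dvd m d a b : d %| m -> a = b %[mod m] -> a = b %[mod d].
Proof. by move=> H E; rewrite -(modn_dvdm a H) E modn_dvdm. Qed.
Lemma eqm_sum m N (f g : nat -> nat) : (forall i, f i = g i %[mod m]) ->
  \sum_(i < N) f i = \sum_(i < N) g i %[mod m].
Proof.
move=> H; rewrite -modn_summ (eq_bigr (fun i : 'I_N => g i %% m)) ?modn_summ //.
Qed.
Lemma inv_mod m a : 0 < m -> coprime a m -> exists u, u * a = 1 %[mod m].
Proof.
move=> Hm Ha; exists (a ^ (totient m).-1).
by rewrite -expnSr prednK ?totient_gt0 // Euler_exp_totient.
Qed.
End Helpers.

Lemma mulm1 m w N a : w * N = 1 %[mod m] -> w * N * a = a %[mod m].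
Proof. by move=> Hw; rewrite -modnMml Hw modnMml mul1n. Qed.
Lemma cancel_mod m w N a b : w * N = 1 %[mod m] -> N * a = N * b %[mod m] -> a = b %[mod m].
Proof.
move=> Hw E; rewrite -(mulm1 a Hw) -(mulm1 b Hw) -!mulnA; exact: eqmM.
Qed.

Section Rho.
Variables s t : nat.
Definition r x := s * (x + t).

Lemma iter_aff k y : iter k r y = s ^ k * y + iter k r 0.
Proof.
elim: k y => [|k IH] y /=; first by rewrite expn0 mul1n addn0.
rewrite IH /r expnS; ring.
Qed.

Lemma r_resp m x y : x = y %[mod m] -> r x = r y %[mod m].
Proof. by move=> H; rewrite /r; apply: eqmM => //; apply: eqmD. Qed.

Lemma iter_resp m k x y : x = y %[mod m] -> iter k r x = iter k r y %[mod m].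
Proof. by move=> H; elim: k => //= k IH; apply: r_resp. Qed.

Lemma iter_period_gen m T : (forall y, iter T r y = y %[mod m]) ->
  forall j y, iter (j * T) r y = y %[mod m].
Proof.
move=> H; elim=> [|j IH] y //=.
rewrite mulSn iterD; apply: etrans (H _); exact: iter_resp.
Qed.

Lemma iter_congr m T a b : (forall y, iter T r y = y %[mod m]) ->
  a = b %[mod T] -> forall y, iter a r y = iter b r y %[mod m].
Proof.
move=> H E y.
rewrite (divn_eq a T) (divn_eq b T) E !iterD.
by rewrite !iter_period_gen.
Qed.

Lemma iter_period m o : s ^ o = 1 %[mod m] -> forall y, iter (o * m) r y = y %[mod m].
Proof.
move=> Ho y.
have H0 : forall j, iter (o * j) r 0 = j * iter o r 0 %[mod m].
  elim=> [|j IH]; first by rewrite muln0.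
  rewrite mulnS iterD (iter_aff o) mulSn addnC.
  apply: eqmD => //. 
  by rewrite -(mul1n (j * _)); apply: eqmM.
rewrite iter_aff -[y in _ = y %[mod m]]addn0.
apply: eqmD.
  rewrite -[y in _ = y %[mod m]]mul1n; apply: eqmM => //.
  by rewrite expnM -modnXm Ho modnXm exp1n.
by rewrite H0 -modnMml modnn.
Qed.

Lemma iter_commute n q k x : q * t = t %[mod n] ->
  q * iter k r x = iter k r (q * x) %[mod n].
Proof.
move=> Hq; elim: k => [|k IH] //=.
rewrite -(r_resp IH).
rewrite /r.
have -> : q * (s * (iter k r x + t)) = s * (q * iter k r x + q * t) by ring.
apply: eqmM => //; exact: eqmD.
Qed.

Lemma iter_parity (p : nat -> bool) : (forall x, p (r x) = ~~ p x) ->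
  forall k x, p (iter k r x) = odd k (+) p x.
Proof.
move=> H; elim=> [|k IH] x //=.
by rewrite H IH; case: (odd k); case: (p x).
Qed.

Lemma fixpt m L N w : iter N (iter L r) 0 = 0 %[mod m] -> w * N = 1 %[mod m] ->
  iter L r (w * \sum_(i < N) iter i (iter L r) 0) = w * \sum_(i < N) iter i (iter L r) 0 %[mod m].
Proof.
move=> HN Hw; set h := iter L r.
set f := fun i => iter i h 0.
set S := \sum_(i < N) f i.
have hA y : h y = s ^ L * y + h 0 by rewrite /h iter_aff.
suff Step : N * h (w * S) = N * (w * S) %[mod m].
  exact: cancel_mod Hw Step.
have -> : N * (w * S) = (w * N) * S by ring.
rewrite (mulm1 _ Hw).
have E1 : N * h (w * S) = (w * N) * (s ^ L * S) + N * h 0 by rewrite hA; ring.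
rewrite E1.
have E2 : s ^ L * S + N * h 0 = \sum_(i < N) f i.+1.
  rewrite /S big_distrr /= -[N in N * _](card_ord N) -sum_nat_const -big_split /=.
  by apply: eq_bigr => i _; rewrite /f /= -hA.
have E3 : \sum_(i < N.+1) f i = f 0 + \sum_(i < N) f i.+1.
  by rewrite big_ord_recl.
have E4 : \sum_(i < N.+1) f i = S + f N by rewrite big_ord_recr.
have E5 : \sum_(i < N) f i.+1 = S + f N by rewrite -E4 E3 /f /= add0n.
apply: etrans (_ : 1 * (s ^ L * S) + N * h 0 = _ %[mod m]).
  apply: eqmD => //; exact: eqmM.
rewrite mul1n E2 E5 /f /h -modnDmr HN modnDmr addn0 //.
Qed.
End Rho.

Lemma pcong m (p : nat -> bool) a b : (forall x, p (x %% m) = p x) -> a = b %[mod m] -> p a = p b.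
Proof. by move=> H E; rewrite -(H a) E H. Qed.

Section Char.
Variables (m : nat) (Hm : 0 < m).
Definition ordm x : 'I_m := Ordinal (ltn_pmod x Hm).

Lemma img_memP (f : nat -> nat) (P : {set 'I_m}) (j : 'I_m) :
 reflect (exists2 i : 'I_m, i \in P & val j = f i %% m) (j \in img_mod f P).
Proof.
rewrite inE; apply: (iffP existsP) => [[i /andP[Hi /eqP E]]|[i Hi E]].
  by exists i.
by exists i; rewrite Hi E eqxx.
Qed.

Lemma img_ord f P x : (forall y, f (y %% m) = f y %[mod m]) ->
  (forall y z, f y = f z %[mod m] -> y = z %[mod m]) ->
  (ordm (f x) \in img_mod f P) = (ordm x \in P).
Proof.
move=> Hc Hi; apply/idP/idP.
  move/img_memP => [i Hi' E]; move: E => /= /Hi E.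
  suff -> : ordm x = i by [].
  by apply: val_inj => /=; rewrite E modn_small.
move=> Hx; apply/img_memP; exists (ordm x) => //=.
Qed.

Lemma char q s t : coprime q m -> coprime s m ->
  typeI_duadic_exists q m s t <-> exists p : nat -> bool,
    [/\ forall x, p (x %% m) = p x, forall x, p (q * x) = p x
      & forall x, p (s * (x + t)) = ~~ p x].
Proof.
move=> Hq Hs.
have [uq Huq] := inv_mod Hm Hq.
have [us Hus] := inv_mod Hm Hs.
have cq : forall y, q * (y %% m) = q * y %[mod m] by move=> y; rewrite modnMmr.
have iq : forall y z, q * y = q * z %[mod m] -> y = z %[mod m].
  move=> y z E; apply: (cancel_mod Huq); exact: E.
have cs : forall y, s * (y %% m + t) = s * (y + t) %[mod m].
  by move=> y; apply: eqmM => //; rewrite modnDml.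
have is_ : forall y z, s * (y + t) = s * (z + t) %[mod m] -> y = z %[mod m].
  move=> y z /(cancel_mod Hus) E; apply/eqP; rewrite -(eqn_modDr t); exact/eqP.
split.
  move=> [P [Hmu [HU HI]]].
  have Hc : forall y : 'I_m, (y \in rho s t P) = (y \notin P).
    move=> y; move/setP: HU => /(_ y); move/setP: HI => /(_ y).
    by rewrite !inE; case: (y \in P); case: (y \in rho s t P).
  exists (fun x => ordm x \in P); split.
  - by move=> x; congr (_ \in P); apply: val_inj => /=; rewrite modn_mod.
  - move=> x; rewrite -[in LHS]Hmu.
    rewrite /mu; exact: (img_ord _ _ cq iq).
  - move=> x; apply/idP/idP.
    + move=> H1; apply/negP => H2.
      have : ordm (s * (x + t)) \in rho s t P by rewrite /rho (img_ord _ _ cs is_).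
      by rewrite Hc H1.
    + move=> H1; have : ordm (s * (x + t)) \notin rho s t P by rewrite /rho (img_ord _ _ cs is_).
      by rewrite Hc negbK.
move=> [p [Hper Hpq Hps]].
have pc := pcong Hper.
have Hrho : forall j : 'I_m, (j \in rho s t [set i : 'I_m | p i]) = ~~ p j.
  move=> j; apply/img_memP/idP.
    by move=> [i Hi E]; rewrite E Hper Hps; rewrite inE in Hi; rewrite Hi.
  move=> Hj; set z := us * j + (m - t %% m).
  have Ez : s * (z + t) = j %[mod m].
    have E1 : z + t = us * j + (m - t %% m + t) by rewrite /z addnA.
    have E2 : m - t %% m + t = 0 %[mod m].
      have Hle : t %% m <= m by apply/ltnW/ltn_pmod.
      by rewrite -modnDmr subnK // modnn mod0n.
    rewrite E1 -modnMmr -modnDmr E2 mod0n addn0 modnMmr mulnA (mulnC s).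
    exact: mulm1.
  exists (ordm z); first by rewrite inE /= Hper -[p z]negbK -Hps (pc _ _ Ez).
  by rewrite /= cs Ez modn_small.
exists [set i : 'I_m | p i]; split; last split.
- apply/setP => j; rewrite [RHS]inE /mu; apply/img_memP/idP.
    by move=> [i Hi E]; rewrite E Hper Hpq; rewrite inE in Hi.
  move=> Hj; exists (ordm (uq * j)).
    rewrite inE /= Hper -Hpq; rewrite (pc _ j) //.
    by rewrite mulnA (mulnC q); exact: mulm1.
  by rewrite /= modnMmr mulnA (mulnC q) (mulm1 _ Huq) modn_small.
- by apply/setP => j; rewrite in_setU Hrho in_setT inE; case: (p j).
- by apply/setP => j; rewrite in_setI Hrho in_set0 inE; case: (p j).
Qed.
End Char.

Lemma odd_p2' m : odd m`_(2^').
Proof.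
have := part_pnat (2^') m; rewrite p'natE // dvdn2 negbK; exact.
Qed.

Lemma totient2 v : totient (2 ^ v) = 2 ^ v.-1.
Proof.
case: v => [|v]; first by [].

by rewrite totient_pfactor // mul1n.
Qed.

Lemma crt d n' a b : coprime d n' -> a = b %[mod d] -> a = b %[mod n'] -> a = b %[mod d * n'].
Proof. by move=> H E1 E2; apply/eqP; rewrite chinese_remainder // E1 E2 !eqxx. Qed.

Theorem lemma3p9 (q n s t : nat) :
  prime_power q -> 0 < n -> coprime q n ->
  s < n -> coprime s n -> t < n -> q * t = t %[mod n] ->
  typeI_duadic_exists q n s t <->
  typeI_duadic_exists q (2 ^ logn 2 n) (s %% 2 ^ logn 2 n) (t %% 2 ^ logn 2 n).
Proof.
move=> _ Hn Hqn _ Hsn _ Hqt.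
set v := logn 2 n; set d := 2 ^ v.
have Hd : d = n`_2 by rewrite p_part.
set n' := n`_(2^').
have Hdn : d * n' = n by rewrite Hd partnC.
have Hcop : coprime d n' by rewrite Hd coprime_partC.
have Hodd : odd n' := odd_p2' n.
have Hd0 : 0 < d by rewrite expn_gt0.
have Hn0 : 0 < n' by rewrite part_gt0.
have dd : d %| n by rewrite -Hdn dvdn_mulr.
have dn' : n' %| n by rewrite -Hdn dvdn_mull.
have Hqd : coprime q d := coprime_dvdr dd Hqn.
have Hsd : coprime s d := coprime_dvdr dd Hsn.
have Hqn' : coprime q n' := coprime_dvdr dn' Hqn.
have Hsn' : coprime s n' := coprime_dvdr dn' Hsn.
have Hsd' : coprime (s %% d) d by rewrite coprime_modl.
rewrite (char Hn _ Hqn Hsn) (char Hd0 _ Hqd Hsd').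
split; last first.
  move=> [p [Hper Hpq Hps]].
  have pc := pcong Hper.
  exists p; split => //.
    by move=> x; apply: pc; apply: eqm_dvd dd _; rewrite modn_mod.
  move=> x; rewrite -Hps; apply: pc.
  by apply: eqmM; rewrite ?modn_mod //; apply: eqmD; rewrite ?modn_mod.
move=> [p [Hper Hpq Hps]].
have pc := pcong Hper.
have cr : forall a b, a = b %[mod d] -> a = b %[mod n'] -> a = b %[mod n].
  by move=> a b E1 E2; rewrite -Hdn; apply: crt.
have HTd := iter_period t (Euler_exp_totient Hsd).
set Td := totient d * d in HTd.
have HTn := iter_period t (Euler_exp_totient Hsn').
set Tn := totient n' * n' in HTn.
have HTn0 : 0 < Tn by rewrite muln_gt0 totient_gt0 Hn0.
set N := Tn`_2; set beta := Tn`_(2^').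
have HTnE : N * beta = Tn by rewrite partnC.
have Hbodd : odd beta := odd_p2' Tn.
set L := beta ^ totient Td.
have HTdE : Td = 2 ^ (v.-1 + v) by rewrite /Td totient2 expnD.
have HL1 : L = 1 %[mod Td].
  apply: Euler_exp_totient; rewrite HTdE; apply: coprimeXr; by rewrite coprimen2.
have HLodd : odd L by rewrite oddX Hbodd orbT.
have HLb : beta %| L by apply: dvdn_exp; rewrite ?totient_gt0 // /Td muln_gt0 totient_gt0 Hd0.
set h := iter L (r s t).
have HhN : iter N h 0 = 0 %[mod n'].
  have E : N * L = L %/ beta * Tn by rewrite -HTnE -{1}(divnK HLb); ring.
  rewrite /h -iterM E.
  exact: iter_period_gen HTn _ _.
have HN : coprime N n' by rewrite /N p_part coprimeXl // coprime2n.
have [w Hw] := inv_mod Hn0 HN.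
set x2 := w * \sum_(i < N) iter i h 0.
have Hfix : h x2 = x2 %[mod n'] by exact: (fixpt HhN Hw).
have Hqx2 : q * x2 = x2 %[mod n'].
  apply: eqm_dvd dn' _.
  rewrite /x2 mulnCA; apply: eqmM => //.
  rewrite big_distrr /=; apply: (@eqm_sum _ _ (fun i => q * iter i h 0) (fun i => iter i h 0)) => i.
  by rewrite /h -iterM iter_commute // muln0.
set E := chinese d n' 1 0; set F := chinese d n' 0 1.
have HE1 : E = 1 %[mod d] by apply: chinese_modl.
have HE0 : E = 0 %[mod n'] by apply: chinese_modr.
have HF0 : F = 0 %[mod d] by apply: chinese_modl.
have HF1 : F = 1 %[mod n'] by apply: chinese_modr.
set c := F * x2.
have Ed : forall y, E * y + c = y %[mod d].
  move=> y; rewrite -[y in _ = y %[mod d]]addn0 -[y in _ = y + 0 %[mod d]]mul1n.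
  apply: eqmD; first exact: eqmM.
  by rewrite -(mul0n x2); apply: eqmM.
have En : forall y, E * y + c = x2 %[mod n'].
  move=> y; rewrite -[x2]add0n -(mul0n y).
  apply: eqmD; first exact: eqmM.
  by rewrite -[x2 in _ = x2 %[mod n']]mul1n; apply: eqmM.
pose p' x := p (E * x + c).
have Hper' : forall x, p' (x %% d) = p' x.
  move=> x; apply: pc; apply: cr; first by rewrite !Ed modn_mod.
  by rewrite !En.
have pc' := pcong Hper'.
exists p'; split => //.
  move=> x; rewrite /p' -(Hpq (E * x + c)); apply: pc; apply: cr.
    by rewrite (Ed (q * x)) -[RHS]modnMmr (Ed x) modnMmr.
  by rewrite (En (q * x)) -[RHS]modnMmr (En x) modnMmr Hqx2.
move=> x.
have -> : p' (s %% d * (x + t %% d)) = p' (s * (x + t)).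
  apply: pc'; apply: eqmM; rewrite ?modn_mod //; apply: eqmD; rewrite ?modn_mod //.
have -> : p' (s * (x + t)) = p (h (E * x + c)).
  apply: pc; apply: cr.
    rewrite (Ed (s * (x + t))) /h (iter_resp s t L (Ed x)).
    by rewrite (iter_congr HTd HL1).
  by rewrite (En (s * (x + t))) /h (iter_resp s t L (En x)) Hfix.
by rewrite /h (iter_parity Hps) HLodd.
Qed.
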